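(* Let $G$ be a word-representable graph. Then for all $n\ge 3$, $l(G \,\square\, K_n) \le n\,l(G) + (n^2-1)|G|$.
   Context: All graphs are simple and undirected; $|G|$ denotes the number of vertices of $G$ and $K_n$ is the complete graph on $n$ vertices. Letters $x,y$ alternate in a word $w$ if deleting all other letters from $w$ yields $xyxy\ldots$ or $yxyx\ldots$ (of either parity). A word $w$ over $V(G)$ represents $G$ if every vertex occurs in $w$ and for all distinct $x,y$, $xy\in E(G)$ iff $x,y$ alternate in $w$; $G$ is word-representable if such a word exists, and $l(G)$ is the minimum length of a word representing $G$. The Cartesian product $G\,\square\,H$ has vertex set $V(G)\times V(H)$, with $(u,v)$ adjacent to $(u',v')$ iff either $u=u'$ and $vv'\in E(H)$, or $v=v'$ and $uu'\in E(G)$. *)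

(* Defs.v *)
From mathcomp Require Import all_boot.
From Stdlib Require Import ClassicalEpsilon.
Set Implicit Arguments. Unset Strict Implicit. Unset Printing Implicit Defensive.

Definition simple_graph (V : finType) (e : rel V) : Prop :=
  symmetric e /\ irreflexive e.

(* x and y alternate in w: deleting all other letters gives xyxy... or yxyx...
   i.e. the restriction of w to {x,y} has no two consecutive equal letters. *)
Definition alternate (V : eqType) (w : seq V) (x y : V) : bool :=
  sorted (fun a b => a != b) [seq z <- w | (z == x) || (z == y)].

Definition represents (V : finType) (e : rel V) (w : seq V) : bool :=
  [forall v : V, v \in w] &&
  [forall x : V, forall y : V, (x != y) ==> (e x y == alternate w x y)].

Definition word_representable (V : finType) (e : rel V) : Prop :=
  exists w : seq V, represents e w.

Definition rep_of_len (V : finType) (e : rel V) (k : nat) : bool :=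
  [exists t : k.-tuple V, represents e t].

(* l(G): minimum length of a word representing G (0 by convention if G is
   not word-representable; it is only used for word-representable graphs). *)
Definition lmin (V : finType) (e : rel V) : nat :=
  match excluded_middle_informative (exists k, rep_of_len e k) with
  | left h => ex_minn h
  | right _ => 0
  end.

Definition complete_rel (n : nat) : rel 'I_n := fun i j => i != j.

Definition cart_prod (U W : finType) (eG : rel U) (eH : rel W) : rel (U * W) :=
  fun p q => ((p.1 == q.1) && eH p.2 q.2) || ((p.2 == q.2) && eG p.1 q.1).

(* Main.v *)
Require Import Defs.
From mathcomp Require Import all_boot.
From mathcomp Require Import zify.
From Stdlib Require Import ClassicalEpsilon.
Set Implicit Arguments. Unset Strict Implicit. Unset Printing Implicit Defensive.

Definition Pi (V : eqType) (n : nat) (s : seq V) (R : seq 'I_n) : seq (V * 'I_n) :=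
  flatten [seq [seq (z, r) | r <- R] | z <- s].

Lemma Pi_cons (V : eqType) n (z : V) s (R : seq 'I_n) :
  Pi (z :: s) R = [seq (z, r) | r <- R] ++ Pi s R.
Proof. by []. Qed.

Lemma size_Pi (V : eqType) n (s : seq V) (R : seq 'I_n) : size (Pi s R) = size s * size R.
Proof. elim: s => //= z s IH; by rewrite Pi_cons size_cat size_map IH mulSn. Qed.

Lemma mem_Pi (V : eqType) n (s : seq V) (R : seq 'I_n) z r :
  z \in s -> r \in R -> (z, r) \in Pi s R.
Proof.
elim: s => //= z' s IH; rewrite in_cons Pi_cons mem_cat => /orP [/eqP -> Hr|Hz Hr].
  by rewrite map_f.
by rewrite IH ?orbT.
Qed.

Lemma filter_Pi_same (V : eqType) n (s : seq V) (R : seq 'I_n) x a b :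
  filter (fun z => (z == (x,a)) || (z == (x,b))) (Pi s R) =
  map (pair x) (filter (fun r => (r == a) || (r == b)) (flatten (nseq (count_mem x s) R))).
Proof.
elim: s => //= z s IH; rewrite Pi_cons filter_cat IH.
case: (eqVneq z x) => [->|Hzx] /=.
  rewrite add0n filter_cat map_cat filter_map; congr (_ ++ _); congr map.
  by apply: eq_filter => r /=; rewrite !xpair_eqE eqxx.
rewrite add0n filter_map.
rewrite (@eq_filter _ _ pred0) ?filter_pred0 //.
by move=> r /=; rewrite !xpair_eqE (negbTE Hzx).
Qed.

Definition Fxy (V : eqType) (x y : V) := fun z => (z == x) || (z == y).

Lemma filter_Pi_cross (V : eqType) n (s : seq V) (R : seq 'I_n) x y a b :
  x != y ->
  filter (fun z => (z == (x,a)) || (z == (y,b))) (Pi s R) =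
  flatten [seq (if z == x then [seq (x, r) | r <- filter (pred1 a) R]
                else [seq (y, r) | r <- filter (pred1 b) R]) | z <- filter (Fxy x y) s].
Proof.
move=> Hxy; elim: s => //= z s IH; rewrite Pi_cons filter_cat IH filter_map /Fxy.
case: (eqVneq z x) => [->|Hzx] /=.
  rewrite eqxx; congr (_ ++ _); congr map; apply: eq_filter => r /=.
  by rewrite !xpair_eqE eqxx (negbTE Hxy) /= orbF.
case: (eqVneq z y) => [->|Hzy] /=.
  rewrite eq_sym (negbTE Hxy); congr (_ ++ _); congr map; apply: eq_filter => r /=.
  by rewrite !xpair_eqE eqxx eq_sym (negbTE Hxy).
rewrite (@eq_filter _ _ pred0) ?filter_pred0 //.
by move=> r /=; rewrite !xpair_eqE (negbTE Hzx) (negbTE Hzy).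
Qed.

Lemma sorted_nseq2 (T : eqType) (u v : T) q :
  u != v -> sorted (fun a b => a != b) (flatten (nseq q [:: u; v])).
Proof.
move=> Huv; elim: q => //= q IH; apply/andP; split => //.
case: q IH => //= q IH; apply/andP; split => //; by rewrite eq_sym.
Qed.

Lemma sorted_XY (T : eqType) (X Y : T) j m :
  X != Y -> sorted (fun a b => a != b) (flatten (nseq j [:: X; Y]) ++ X :: m) =
            sorted (fun a b => a != b) (X :: m).
Proof.
move=> HXY; elim: j => //= j IH; rewrite -IH.
case: j IH => [|j] /= IH; rewrite HXY /= eq_sym HXY //.
Qed.

Lemma not_sorted_zz (T : eqType) (l1 l2 : seq T) z :
  sorted (fun a b => a != b) (l1 ++ z :: z :: l2) = false.
Proof. by rewrite sorted_cat_cons /= eqxx andbF. Qed.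

Lemma rot_take (T : Type) (x0 : T) (E : seq T) k m :
  k + m <= size E ->
  take k E ++ flatten [seq rot i E ++ [:: nth x0 E i] | i <- iota k m] =
  flatten (nseq m E) ++ take (k + m) E.
Proof.
elim: m k => [|m IH] k H /=; first by rewrite addn0 cats0.
rewrite {1}/rot -!catA [take k E ++ (drop k E ++ _)]catA cat_take_drop (catA (take k E)) cats1 -take_nth; last by lia.
by rewrite IH ?addSnnS //; lia.
Qed.

Lemma cat_nseq_rot (T : Type) (t d : seq T) c :
  t ++ flatten (nseq c (d ++ t)) = flatten (nseq c (t ++ d)) ++ t.
Proof. by elim: c => [|c IH] /=; rewrite ?cats0 // -!catA IH. Qed.

Lemma T0_eq (T : Type) (x0 : T) (E : seq T) c :
  0 < size E ->
  flatten [seq rot i E ++ [:: nth x0 E i] | i <- iota 0 (size E).-1] ++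
  flatten (nseq c (rot (size E).-1 E)) ++ [:: nth x0 E (size E).-1] =
  flatten (nseq ((size E).-1 + c + 1) E).
Proof.
move=> H.
have := @rot_take T x0 E 0 (size E).-1; rewrite add0n take0 /= => ->; last by lia.
rewrite -catA {1}/rot (catA (take _ E)) cat_nseq_rot -catA cats1 -take_nth; last by lia.
by rewrite prednK // take_size cat_take_drop !nseqD !flatten_cat /= cats0 catA.
Qed.

Definition preW (V : eqType) n (x0 : 'I_n) (s : seq V) : seq (V * 'I_n) :=
  flatten [seq Pi s (rot k (enum 'I_n)) ++ Pi s [:: nth x0 (enum 'I_n) k] | k <- iota 0 n.-1].

Definition bigW (V : eqType) n (x0 : 'I_n) (w : seq V) : seq (V * 'I_n) :=
  preW x0 (rev (undup (rev w))) ++ Pi w (rot n.-1 (enum 'I_n)).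

Lemma filter_enum2 n (a b : 'I_n) : a != b ->
  exists u v, u != v /\ filter (fun r => (r == a) || (r == b)) (enum 'I_n) = [:: u; v].
Proof.
move=> Hab.
have : [/\ uniq (filter (fun r => (r == a) || (r == b)) (enum 'I_n)),
          a \in filter (fun r => (r == a) || (r == b)) (enum 'I_n),
          b \in filter (fun r => (r == a) || (r == b)) (enum 'I_n) &
          all (fun r => (r == a) || (r == b)) (filter (fun r => (r == a) || (r == b)) (enum 'I_n))].
  split; [by rewrite filter_uniq // enum_uniq | | | exact: filter_all];
  by rewrite mem_filter eqxx ?orbT /= mem_enum.
case: (filter _ _) => [|u [|v [|t l]]] [].
- by [].
- by move=> _; rewrite !inE => /eqP Ea /eqP Eb _; rewrite Ea Eb eqxx in Hab.
- by move=> Hu _ _ _; exists u, v; move: Hu => /= /andP []; rewrite inE.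
- move=> /= /and3P [Hu1 Hv1 _] _ _ /and4P [Gu Gv Gt _].
  move: Hu1 Hv1; rewrite !inE !negb_or => /and3P [Huv Hut _] /andP [Hvt _].
  move: Gu Gv Gt Huv Hut Hvt.
  by do 3 (case/orP => /eqP ->); rewrite ?eqxx.
Qed.

Lemma sorted_ne_pair (V : eqType) n (x : V) (l : seq 'I_n) :
  sorted (fun p q => p != q) [seq (x, r) | r <- l] = sorted (fun p q => p != q) l.
Proof.
rewrite sorted_map; case: l => //= r l; apply: eq_path => u v /=.
by rewrite xpair_eqE eqxx.
Qed.

Lemma same_vertex (V : eqType) n (x0 : 'I_n) (w : seq V) x a b :
  x \in w -> a != b -> alternate (bigW x0 w) (x, a) (x, b).
Proof.
move=> Hx Hab; rewrite /alternate /bigW /preW filter_cat.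
set E := enum 'I_n.
set G := (fun r : 'I_n => (r == a) || (r == b)).
have pre : forall ks (s : seq V), count_mem x s = 1 ->
   filter (fun z => (z == (x,a)) || (z == (x,b)))
      (flatten [seq Pi s (rot k E) ++ Pi s [:: nth x0 E k] | k <- ks]) =
   map (pair x) (filter G (flatten [seq rot k E ++ [:: nth x0 E k] | k <- ks])).
  elim => //= k ks IH s Hs.
  by rewrite !filter_cat !filter_Pi_same Hs /= !cats0 IH // !filter_cat !map_cat.
rewrite pre; last first.
  by rewrite count_uniq_mem ?rev_uniq ?undup_uniq // mem_rev mem_undup mem_rev Hx.
rewrite filter_Pi_same -map_cat -filter_cat sorted_ne_pair.
have n0 : 0 < n by apply: (leq_ltn_trans (leq0n a) (ltn_ord a)).
have := @T0_eq _ x0 E (count_mem x w); rewrite size_enum_ord => /(_ n0).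
rewrite catA => /(congr1 (filter G)).
rewrite filter_cat filter_flatten map_nseq.
have [u [v [Huv ->]]] := filter_enum2 Hab.
move=> H; have := sorted_nseq2 (n.-1 + count_mem x w + 1) Huv.
by rewrite -H => /cat_sorted2 [].
Qed.

Lemma undup_const (V : eqType) (l : seq V) y :
  y \in l -> all (pred1 y) l -> undup l = [:: y].
Proof.
elim: l => //= z l IH; rewrite inE => Hy /andP [/eqP Hz Hall]; subst z.
case Hyl: (y \in l); first by apply: IH.
by case: l IH Hy Hall Hyl => //= z l _ _ /andP [/eqP ->]; rewrite inE eqxx.
Qed.

Lemma undup_rcons2 (V : eqType) (t : seq V) x y :
  x != y -> y \in t -> all (Fxy x y) t -> undup (rcons t x) = [:: y; x].
Proof.
move=> Hxy Hy Hall; rewrite undup_rcons filter_undup (@undup_const _ _ y) //.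
  by rewrite mem_filter eq_sym Hxy Hy.
apply/allP => z; rewrite mem_filter => /andP [zx zt].
by move/allP: Hall => /(_ z zt); rewrite /Fxy (negbTE zx).
Qed.

Lemma s_order (V : eqType) (w : seq V) x y l' :
  x != y -> y \in w -> filter (Fxy x y) w = x :: l' ->
  filter (Fxy x y) (rev (undup (rev w))) = [:: x; y].
Proof.
move=> Hxy Hy Hl.
move: (filter_all (Fxy x y) w); rewrite Hl /= => /andP [_ Hall'].
have Hyl : y \in l'.
  have : y \in filter (Fxy x y) w by rewrite mem_filter /Fxy eqxx orbT Hy.
  by rewrite Hl inE eq_sym (negbTE Hxy).
by rewrite filter_rev filter_undup filter_rev Hl rev_cons (@undup_rcons2 _ _ x y) // ?mem_rev ?all_rev.
Qed.

Lemma flatten_if (V : eqType) (T : Type) (x : V) (X Y : T) (L : seq V) :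
  flatten [seq (if z == x then [:: X] else [:: Y]) | z <- L] =
  map (fun z => if z == x then X else Y) L.
Proof. by elim: L => //= z L ->; case: (z == x). Qed.

Lemma cross (V : eqType) n (x0 : 'I_n) (w : seq V) x y a b l' :
  x != y -> y \in w -> filter (Fxy x y) w = x :: l' ->
  alternate (bigW x0 w) (x, a) (y, b) = (a == b) && alternate w x y.
Proof.
move=> Hxy Hy Hl.
have Hs := s_order Hxy Hy Hl.
set E := enum 'I_n.
have Hrot : forall k c, filter (pred1 c) (rot k E) = [:: c].
  by move=> k c; rewrite filter_pred1_uniq ?rot_uniq ?enum_uniq // mem_rot mem_enum.
set X := (x, a); set Y := (y, b).
set h := fun z => if z == x then X else Y.
have HB : filter (fun z => (z == X) || (z == Y)) (Pi w (rot n.-1 E)) = X :: map h l'.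
  rewrite filter_Pi_cross // Hl !Hrot /= -/X -/Y.
  by rewrite eqxx (flatten_if x X Y l').
set roundF := fun k => [:: X; Y] ++ ([seq (x, r) | r <- filter (pred1 a) [:: nth x0 E k]] ++
                                      [seq (y, r) | r <- filter (pred1 b) [:: nth x0 E k]]).
have HP : forall ks, filter (fun z => (z == X) || (z == Y))
     (flatten [seq Pi (rev (undup (rev w))) (rot k E) ++ Pi (rev (undup (rev w))) [:: nth x0 E k] | k <- ks])
     = flatten (map roundF ks).
  elim => //= k ks IH; rewrite !filter_cat IH !filter_Pi_cross // Hs /= eqxx eq_sym (negbTE Hxy) !Hrot /=. by rewrite cats0.
have Halt : alternate w x y = sorted (fun p q => p != q) (x :: l') by rewrite /alternate -Hl.
have Hmono : sorted (fun p q => p != q) (X :: map h l') = sorted (fun p q => p != q) (x :: l').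
  have -> : X :: map h l' = map h (x :: l') by rewrite /= /h eqxx.
  apply: (mono_sorted_in (P := Fxy x y)); last by rewrite -Hl filter_all.
  move=> u v /orP [] /eqP -> /orP [] /eqP ->; rewrite /h ?eqxx ?(negbTE Hxy) ?(eq_sym y x) ?(negbTE Hxy) //=;
   by rewrite /X /Y xpair_eqE ?(negbTE Hxy) ?(eq_sym y x) ?(negbTE Hxy).
rewrite Halt /alternate /bigW /preW filter_cat HP HB.
have HXY : X != Y by rewrite /X /Y xpair_eqE negb_and Hxy.
case: (eqVneq a b) => [Eab|Nab] /=.
  subst b.
  have [j ->] : exists j, flatten (map roundF (iota 0 n.-1)) = flatten (nseq j [:: X; Y]).
    elim: (iota 0 n.-1) => [|k ks [j IH]]; first by exists 0.
    rewrite /= IH /roundF /=; case: eqP => [->|_] /=.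
      by exists j.+2.
    by exists j.+1.
  by rewrite sorted_XY.
set c : 'I_n := if a < b then a else b.
have Hc : c < n.-1.
  rewrite /c; case: ifP => H; have := ltn_ord a; have := ltn_ord b; move: Nab H;
  rewrite -val_eqE /=; lia.
have Hsplit : n.-1 = c + (n.-1 - c.+1).+1 by lia.
rewrite Hsplit iotaD add0n /= map_cat flatten_cat /= -!catA.
have HC : forall r t, exists t', flatten (map roundF (iota c.+1 r)) ++ X :: t = X :: t'.
  by move=> [|r] t /=; [exists t | eexists].
have Ec : nth x0 E c = c by rewrite nth_ord_enum.
have [t' Ht'] := HC (n.-1 - c.+1) (map h l').
rewrite Ec.
move: Ht'; rewrite /c; case: ifP => _ /= Ht'; rewrite ?eqxx ?(negbTE Nab) ?(eq_sym b a) ?(negbTE Nab) /= Ht'.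
  by rewrite (_ : [:: X, Y, X, X & t'] = [:: X; Y] ++ X :: X :: t') // catA not_sorted_zz.
by rewrite (_ : [:: X, Y, Y, X & t'] = [:: X] ++ Y :: Y :: X :: t') // catA not_sorted_zz.
Qed.

Lemma alternate_sym (V : eqType) (s : seq V) p q : alternate s p q = alternate s q p.
Proof. by rewrite /alternate; under eq_filter => z do rewrite orbC. Qed.

Lemma size_preW (V : eqType) n (x0 : 'I_n) (s : seq V) ks :
  size (flatten [seq Pi s (rot k (enum 'I_n)) ++ Pi s [:: nth x0 (enum 'I_n) k] | k <- ks])
  = size ks * (size s * n + size s).
Proof.
elim: ks => //= k ks IH.
by rewrite !size_cat IH !size_Pi size_rot size_enum_ord /= muln1 mulSn.
Qed.

Lemma represents_bigW (V : finType) (e : rel V) n (x0 : 'I_n) (w : seq V) :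
  symmetric e -> represents e w -> represents (cart_prod e (@complete_rel n)) (bigW x0 w).
Proof.
move=> Hsym Hw; move: (Hw) => /andP [/forallP Hall /forallP Hedge].
apply/andP; split.
  apply/forallP => [[z r]]; rewrite /bigW mem_cat; apply/orP; right.
  by apply: mem_Pi; rewrite ?Hall // mem_rot mem_enum.
apply/forallP => [[x a]]; apply/forallP => [[y b]]; apply/implyP => Hne; apply/eqP.
rewrite /cart_prod /complete_rel /=.
case: (eqVneq x y) Hne => [<-|Hxy] Hne /=.
  have Hab : a != b by move: Hne; rewrite xpair_eqE eqxx.
  by rewrite Hab /= same_vertex.
have Exy : e x y = alternate w x y.
  by move: (Hedge x) => /forallP /(_ y) /implyP /(_ Hxy) /eqP.
rewrite Exy.
have Hx : x \in filter (Fxy x y) w by rewrite mem_filter /Fxy eqxx Hall.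
case Hl: (filter (Fxy x y) w) Hx => [|z l'] //.
have : Fxy x y z by have := filter_all (Fxy x y) w; rewrite Hl => /andP [].
case/orP => /eqP Ez; subst z => _.
  by rewrite (cross _ _ _ Hxy (Hall y) Hl).
have Hl2 : filter (Fxy y x) w = y :: l'.
  by rewrite -Hl; apply: eq_filter => z; rewrite /Fxy orbC.
rewrite [alternate (bigW _ _) _ _]alternate_sym (cross _ _ _ _ (Hall x) Hl2) ?(eq_sym y x) //.
by rewrite eq_sym alternate_sym.
Qed.

Unset Implicit Arguments.

Theorem mainTheorem6 (V : finType) (e : rel V) :
  simple_graph e -> word_representable e ->
  forall n : nat, 3 <= n ->
    word_representable (cart_prod e (@complete_rel n)) /\
    lmin (cart_prod e (@complete_rel n)) <= n * lmin e + (n ^ 2 - 1) * #|V|.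
Proof.
move=> [Hsym Hirr] [w0 Hw0] n Hn.
have ex : exists k, rep_of_len e k.
  by exists (size w0); apply/existsP; exists (in_tuple w0).
have [w Hw Hsize] : exists2 w, represents e w & size w = lmin e.
  rewrite /lmin; case: excluded_middle_informative => [h|nh]; last by exfalso; apply: nh.
  case: ex_minnP => m /existsP [t Ht] _; exists (val t) => //; by rewrite size_tuple.
have n0 : 0 < n by apply: leq_trans Hn.
set x0 : 'I_n := Ordinal n0.
have Hrep := represents_bigW x0 Hsym Hw.
split; first by exists (bigW x0 w).
have Hle : lmin (cart_prod e (@complete_rel n)) <= size (bigW x0 w).
  rewrite /lmin; case: excluded_middle_informative => [h|_] //.
  case: ex_minnP => m _ Hmin; apply: Hmin; apply/existsP; exists (in_tuple (bigW x0 w)).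
  exact: Hrep.
apply: (leq_trans Hle).
rewrite /bigW /preW size_cat size_preW size_Pi size_rot size_enum_ord size_iota Hsize.
have HS : size (rev (undup (rev w))) <= #|V|.
  rewrite size_rev; move/card_uniqP: (undup_uniq (rev w)) => <-; exact: max_card.
move: HS; set S := size (rev (undup (rev w))); set L := lmin e; set C := #|V| => HS.
case: n Hn {n0 x0 Hrep Hle} => [|m] //= _.
rewrite -[m.+1 ^ 2]/(m.+1 * m.+1).
nia.
Qed.
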